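(* Let $k\to A$ and $k\to B$ be homomorphisms of commutative rings, and let $D:M_1\to M_2$ and $E:N_1\to N_2$ be differential operators (relative to $k$) between $A$-modules $M_1,M_2$ and $B$-modules $N_1,N_2$ respectively. Then $$D\otimes_kE:M_1\otimes_kN_1\to M_2\otimes_kN_2$$ is a differential operator (relative to $k$) between the $A\otimes_kB$-modules $M_1\otimes_kN_1$ and $M_2\otimes_kN_2$.
   Context: For a ring homomorphism $k\to R$ and an $R$-module $Q$, $I_{R/k}=\ker(R\otimes_kR\to R)$ and $\mathcal J^n(Q/k)=(R\otimes_kQ)/I_{R/k}^{n+1}(R\otimes_kQ)$, with universal derivation $d^n_{Q/k}(q)=\overline{1\otimes q}$ and $R$-module structure via $r\mapsto r\otimes1$. A $k$-linear map $D:Q_1\to Q_2$ of $R$-modules is a differential operator relative to $k$ if $D=\widetilde D\circ d^n_{Q_1/k}$ for some $n\in\mathbb N_0$ and some $R$-linear $\widetilde D:\mathcal J^n(Q_1/k)\to Q_2$. *)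

(* Defs.v *)
From HB Require Import structures.
From mathcomp Require Import all_boot all_algebra.
From mathcomp Require Import boolp.
Import GRing.Theory.
Set Implicit Arguments. Unset Strict Implicit. Unset Printing Implicit Defensive.
Local Open Scope ring_scope.
Local Open Scope quotient_scope.

Definition sumf (M N : Type) (W : zmodType) (f : M -> N -> W) (s : seq (M * N)) : W :=
  \sum_(p <- s) f p.1 p.2.

Definition balanced (k : Type) (M N : zmodType) (aM : k -> M -> M) (aN : k -> N -> N)
  (W : zmodType) (f : M -> N -> W) : Prop :=
  [/\ forall m m' n, f (m + m') n = f m n + f m' n,
      forall m n n', f m (n + n') = f m n + f m n' &
      forall c m n, f (aM c m) n = f m (aN c n)].

Section Tensor.
Variables (k : Type) (M N : zmodType) (aM : k -> M -> M) (aN : k -> N -> N).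

Definition tens_rel (s t : seq (M * N)) : Prop :=
  forall (W : zmodType) (f : M -> N -> W), balanced aM aN f -> sumf f s = sumf f t.

Definition tens_eq : rel (seq (M * N)) := fun s t => `[< tens_rel s t >].

Lemma tens_eq_refl : reflexive tens_eq.
Proof. by move=> s; apply/asboolP. Qed.
Lemma tens_eq_sym : symmetric tens_eq.
Proof.
by move=> s t; apply/asboolP/asboolP => h W f hf; rewrite h.
Qed.
Lemma tens_eq_trans : transitive tens_eq.
Proof.
by move=> t s u /asboolP h1 /asboolP h2; apply/asboolP => W f hf; rewrite h1 // h2.
Qed.

Canonical tens_equiv := EquivRel tens_eq tens_eq_refl tens_eq_sym tens_eq_trans.

Definition tensor := {eq_quot tens_eq}.
HB.instance Definition _ := Choice.on tensor.

(** class of a formal sum [\sum_i m_i ⊗ n_i], and a representative *)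
Definition tpi (s : seq (M * N)) : tensor := \pi_{eq_quot tens_eq} s.
Definition trepr (x : tensor) : seq (M * N) := repr (x : {eq_quot tens_eq}).

Lemma tpiK : cancel trepr tpi.
Proof. exact: reprK. Qed.

Lemma tensW (P : tensor -> Type) : (forall s, P (tpi s)) -> forall x, P x.
Proof. by move=> h x; rewrite -[x]tpiK. Qed.

Lemma tensP s t : tens_rel s t -> tpi s = tpi t.
Proof. by move=> h; apply/eqmodP/asboolP. Qed.

Lemma sumf_pi (W : zmodType) (f : M -> N -> W) s :
  balanced aM aN f -> sumf f (trepr (tpi s)) = sumf f s.
Proof.
move=> hf; have /asboolP h : tens_eq (trepr (tpi s)) s.
  by apply/eqmodP; rewrite /trepr /tpi reprK.
exact: h.
Qed.

Definition tens_zero : tensor := tpi [::].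
Definition tens_add (x y : tensor) : tensor := tpi (trepr x ++ trepr y).
Definition tens_opp (x : tensor) : tensor :=
  tpi [seq (- p.1, p.2) | p <- trepr x].

Lemma sumf_cat (W : zmodType) (f : M -> N -> W) s t :
  sumf f (s ++ t) = sumf f s + sumf f t.
Proof. by rewrite /sumf big_cat. Qed.

Lemma sumf_nil (W : zmodType) (f : M -> N -> W) : sumf f [::] = 0.
Proof. by rewrite /sumf big_nil. Qed.

Lemma balancedN (W : zmodType) (f : M -> N -> W) :
  balanced aM aN f -> forall m n, f (- m) n = - f m n.
Proof.
case=> hD _ _ m n.
have f0 : f 0 n = 0.
  have := hD 0 0 n; rewrite addr0 => /esym/eqP.
  by rewrite -subr_eq0 addrK => /eqP.
apply/eqP; rewrite -addr_eq0 -hD addNr; exact/eqP.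
Qed.

Lemma sumf_opp (W : zmodType) (f : M -> N -> W) s : balanced aM aN f ->
  sumf f [seq (- p.1, p.2) | p <- s] = - sumf f s.
Proof.
move=> hf; rewrite /sumf big_map -sumrN; apply: eq_bigr => p _ /=.
exact: balancedN.
Qed.

Lemma tens_addA : associative tens_add.
Proof.
move=> x y z; elim/tensW: x => x; elim/tensW: y => y; elim/tensW: z => z; rewrite /tens_add.
by apply: tensP => W f hf; rewrite ?(sumf_cat, sumf_pi _ hf) addrA.
Qed.

Lemma tens_addC : commutative tens_add.
Proof.
move=> x y; elim/tensW: x => x; elim/tensW: y => y; rewrite /tens_add.
by apply: tensP => W f hf; rewrite ?(sumf_cat, sumf_pi _ hf) addrC.
Qed.

Lemma tens_add0 : left_id tens_zero tens_add.
Proof.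
move=> x; elim/tensW: x => x; rewrite /tens_add /tens_zero.
by apply: tensP => W f hf; rewrite ?(sumf_cat, sumf_pi _ hf) sumf_nil add0r.
Qed.

Lemma tens_addN : left_inverse tens_zero tens_opp tens_add.
Proof.
move=> x; elim/tensW: x => x; rewrite /tens_add /tens_zero /tens_opp.
apply: tensP => W f hf.
by rewrite ?(sumf_cat, sumf_pi _ hf, sumf_opp _ hf) addNr sumf_nil.
Qed.

HB.instance Definition _ :=
  GRing.isZmodule.Build tensor tens_addA tens_addC tens_add0 tens_addN.

Lemma tens_addE s t : tpi s + tpi t = tpi (s ++ t).
Proof.
change (tens_add (tpi s) (tpi t) = tpi (s ++ t)).
by rewrite /tens_add; apply: tensP => W f hf; rewrite ?(sumf_cat, sumf_pi _ hf).
Qed.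

Definition tmul (m : M) (n : N) : tensor := tpi [:: (m, n)].

End Tensor.

Arguments tensor {k M N} aM aN.
Arguments tmul {k M N aM aN}.
Arguments tpi {k M N aM aN}.
Arguments trepr {k M N aM aN}.

Section Lift.
Variables (k : Type) (A B M N M' N' : zmodType).
Variables (aA : k -> A -> A) (aB : k -> B -> B) (aM : k -> M -> M) (aN : k -> N -> N).
Variables (aM' : k -> M' -> M') (aN' : k -> N' -> N').
Variables (op1 : A -> M -> M') (op2 : B -> N -> N').

Definition pairs (s : seq (A * B)) (t : seq (M * N)) : seq (M' * N') :=
  [seq (op1 p.1 q.1, op2 p.2 q.2) | p <- s, q <- t].

Definition lift2 (x : tensor aA aB) (y : tensor aM aN) : tensor aM' aN' :=
  tpi (pairs (trepr x) (trepr y)).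

Lemma sumf_pairs (W : zmodType) (f : M' -> N' -> W) s t :
  sumf f (pairs s t) = \sum_(p <- s) \sum_(q <- t) f (op1 p.1 q.1) (op2 p.2 q.2).
Proof. by rewrite /sumf /pairs big_allpairs_dep. Qed.

Hypothesis op1Dl : forall a a' m, op1 (a + a') m = op1 a m + op1 a' m.
Hypothesis op1Dr : forall a m m', op1 a (m + m') = op1 a m + op1 a m'.
Hypothesis op2Dl : forall b b' n, op2 (b + b') n = op2 b n + op2 b' n.
Hypothesis op2Dr : forall b n n', op2 b (n + n') = op2 b n + op2 b n'.
Hypothesis op1kl : forall c a m, op1 (aA c a) m = aM' c (op1 a m).
Hypothesis op1kr : forall c a m, op1 a (aM c m) = aM' c (op1 a m).
Hypothesis op2kl : forall c b n, op2 (aB c b) n = aN' c (op2 b n).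
Hypothesis op2kr : forall c b n, op2 b (aN c n) = aN' c (op2 b n).

Lemma lift2_pi s t :
  lift2 (tpi s) (tpi t) = tpi (pairs s t).
Proof.
rewrite /lift2; apply: tensP => W f [hD1 hD2 hk]; rewrite !sumf_pairs.
transitivity (\sum_(p <- trepr (tpi (aM:=aA) (aN:=aB) s))
               \sum_(q <- t) f (op1 p.1 q.1) (op2 p.2 q.2)).
  apply: eq_bigr => p _.
  have hb : balanced aM aN (fun m n => f (op1 p.1 m) (op2 p.2 n)).
    split=> [m m' n|m n n'|c m n]; first by rewrite op1Dr hD1.
      by rewrite op2Dr hD2.
    by rewrite op1kr op2kr hk.
  exact: (sumf_pi t hb).
have hb : balanced aA aB
    (fun a b => \sum_(q <- t) f (op1 a q.1) (op2 b q.2)).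
  split=> [a a' b|a b b'|c a b].
  - by rewrite -big_split; apply: eq_bigr => q _; rewrite op1Dl hD1.
  - by rewrite -big_split; apply: eq_bigr => q _; rewrite op2Dl hD2.
  - by apply: eq_bigr => q _; rewrite op1kl op2kl hk.
exact: (sumf_pi s hb).
Qed.

End Lift.

Arguments lift2 {k A B M N M' N' aA aB aM aN aM' aN'} op1 op2 x y.

Definition kact_r (k : Type) (R : pzRingType) (phi : k -> R) : k -> R -> R :=
  fun c r => phi c * r.
Definition kact_m (k : Type) (R : pzRingType) (phi : k -> R) (V : lmodType R) :
  k -> V -> V := fun c v => phi c *: v.

Section TensAlg.
Variables (k A B : comPzRingType) (phiA : {rmorphism k -> A}) (phiB : {rmorphism k -> B}).

Definition tens_alg := tensor (kact_r phiA) (kact_r phiB).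
HB.instance Definition _ := GRing.Zmodule.on tens_alg.

Definition ta_one : tens_alg := tpi [:: (1, 1)].
Definition ta_mul (x y : tens_alg) : tens_alg := lift2 ( *%R ) ( *%R ) x y.

Lemma ta_mul_pi s t : ta_mul (tpi s) (tpi t) = tpi (pairs *%R *%R s t).
Proof.
apply: lift2_pi => *; rewrite /kact_r ?mulrDl ?mulrDr ?mulrA ?mulrCA //.
all: by congr (_ * _); rewrite mulrC.
Qed.

Lemma ta_mulA : associative ta_mul.
Proof.
move=> x y z; elim/tensW: x => x; elim/tensW: y => y; elim/tensW: z => z.
rewrite !ta_mul_pi; apply: tensP => W f hf.
rewrite /sumf /pairs !big_allpairs_dep /=.
under eq_bigr => p _ do rewrite big_allpairs_dep /=.
apply: eq_bigr => p _; apply: eq_bigr => q _; apply: eq_bigr => r _ /=.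
by rewrite !mulrA.
Qed.

Lemma ta_mulC : commutative ta_mul.
Proof.
move=> x y; elim/tensW: x => x; elim/tensW: y => y.
rewrite !ta_mul_pi; apply: tensP => W f hf.
rewrite /sumf /pairs !big_allpairs_dep /= exchange_big /=.
by apply: eq_bigr => p _; apply: eq_bigr => q _; rewrite !(mulrC p.1) !(mulrC p.2).
Qed.

Lemma ta_mul1 : left_id ta_one ta_mul.
Proof.
move=> x; elim/tensW: x => x; rewrite ta_mul_pi; apply: tensP => W f hf.
rewrite /sumf /pairs big_allpairs_dep big_seq1 /=.
by apply: eq_bigr => q _; rewrite !mul1r.
Qed.

Lemma ta_mulDl : left_distributive ta_mul +%R.
Proof.
move=> x y z; elim/tensW: x => x; elim/tensW: y => y; elim/tensW: z => z.
rewrite tens_addE !ta_mul_pi tens_addE; apply: tensP => W f hf.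
by rewrite /sumf /pairs big_cat !big_allpairs_dep big_cat.
Qed.

HB.instance Definition _ :=
  GRing.Zmodule_isComPzRing.Build tens_alg ta_mulA ta_mulC ta_mul1 ta_mulDl.

Definition tens_struct (c : k) : tens_alg := tpi [:: (phiA c, 1)].

Section TensMod.
Variables (M : lmodType A) (N : lmodType B).

Definition tens_mod := tensor (kact_m phiA (V := M)) (kact_m phiB (V := N)).
HB.instance Definition _ := GRing.Zmodule.on tens_mod.

Definition tm_scale (x : tens_alg) (y : tens_mod) : tens_mod :=
  lift2 ( *:%R ) ( *:%R ) x y.

Lemma tm_scale_pi s t : tm_scale (tpi s) (tpi t) = tpi (pairs *:%R *:%R s t).
Proof.
apply: lift2_pi => *; rewrite /kact_r /kact_m ?scalerDl ?scalerDr ?scalerA //;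
  by rewrite mulrC.
Qed.

Lemma tm_scaleA a b v : tm_scale a (tm_scale b v) = tm_scale (a * b) v.
Proof.
elim/tensW: a => a; elim/tensW: b => b; elim/tensW: v => v.
change (tm_scale (tpi a) (tm_scale (tpi b) (tpi v)) =
        tm_scale (ta_mul (tpi a) (tpi b)) (tpi v)).
rewrite ta_mul_pi !tm_scale_pi; apply: tensP => W f hf.
rewrite /sumf /pairs !big_allpairs_dep /=.
under eq_bigr => p _ do rewrite big_allpairs_dep /=.
apply: eq_bigr => p _; apply: eq_bigr => q _; apply: eq_bigr => r _ /=.
by rewrite !scalerA.
Qed.

Lemma tm_scale1 : left_id 1 tm_scale.
Proof.
move=> v; elim/tensW: v => v.
change (tm_scale ta_one (tpi v) = tpi v).
rewrite tm_scale_pi; apply: tensP => W f hf.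
rewrite /sumf /pairs big_allpairs_dep big_seq1 /=.
by apply: eq_bigr => q _; rewrite !scale1r.
Qed.

Lemma tm_scaleDr : right_distributive tm_scale +%R.
Proof.
move=> a v w; elim/tensW: a => a; elim/tensW: v => v; elim/tensW: w => w.
rewrite tens_addE !tm_scale_pi tens_addE; apply: tensP => W f hf.
rewrite /sumf /pairs big_cat !big_allpairs_dep.
under eq_bigr => p _ do rewrite big_cat.
by rewrite big_split.
Qed.

Lemma tm_scaleDl v : {morph tm_scale^~ v : a b / a + b}.
Proof.
move=> a b; elim/tensW: a => a; elim/tensW: b => b; elim/tensW: v => v.
rewrite tens_addE !tm_scale_pi tens_addE; apply: tensP => W f hf.
by rewrite /sumf /pairs big_cat !big_allpairs_dep big_cat.
Qed.

HB.instance Definition _ :=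
  GRing.Zmodule_isLmodule.Build tens_alg tens_mod tm_scaleA tm_scale1 tm_scaleDr tm_scaleDl.

End TensMod.

(** [D ⊗_k E], induced by [m ⊗ n |-> D m ⊗ E n] (well defined for k-linear D, E) *)
Definition tens_map (M1 M2 : lmodType A) (N1 N2 : lmodType B)
  (D : M1 -> M2) (E : N1 -> N2) (x : tens_mod M1 N1) : tens_mod M2 N2 :=
  tpi [seq (D p.1, E p.2) | p <- trepr x].

End TensAlg.

(** For a ring map [phi : k -> R] and an R-module [Q1]:
   - [RtR] is [R ⊗_k R], [RtQ] is [R ⊗_k Q1] (k acting through [phi]);
   - [mult_map] is the multiplication [R ⊗_k R -> R], its kernel is [I_{R/k}];
   - [RR_act] is the [R ⊗_k R]-module structure of [R ⊗_k Q1];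
   - [Ipow_mod n] is the submodule [I^{n+1} (R ⊗_k Q1)], i.e. the set of
     finite sums of elements [x_0 (x_1 (... (x_n y)))] with [x_i ∈ I];
   - [J^n(Q1/k) = (R ⊗_k Q1) / Ipow_mod n], with R-structure [r |-> r ⊗ 1]
     ([jet_R_scale]) and universal derivation [d^n q = class of 1 ⊗ q]
     ([jet_d]).
   An R-linear map [J^n(Q1/k) -> Q2] is the same thing as an R-linear map
   [Dt : R ⊗_k Q1 -> Q2] vanishing on [Ipow_mod n] (universal property of the
   quotient); [D = Dt ∘ d^n] then reads [D q = Dt (1 ⊗ q)]. *)
Section DiffOp.
Variables (k R : comPzRingType) (phi : k -> R) (Q1 Q2 : lmodType R).

Definition RtR := tensor (kact_r phi) (kact_r phi).
Definition RtQ := tensor (kact_r phi) (kact_m phi (V := Q1)).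

Definition mult_map (x : RtR) : R := sumf ( *%R ) (trepr x).
Definition Ikernel (x : RtR) : Prop := mult_map x = 0.

Definition RR_act (x : RtR) (y : RtQ) : RtQ := lift2 ( *%R ) ( *:%R ) x y.

Fixpoint Ipow_gen (n : nat) (z : RtQ) : Prop :=
  match n with
  | 0 => exists x y, Ikernel x /\ z = RR_act x y
  | n'.+1 => exists x y, [/\ Ikernel x, Ipow_gen n' y & z = RR_act x y]
  end.

Definition Ipow_mod (n : nat) (z : RtQ) : Prop :=
  exists s : seq RtQ, (forall g, g \in s -> Ipow_gen n g) /\ z = \sum_(g <- s) g.

Definition jet_R_scale (r : R) (x : RtQ) : RtQ := RR_act (tpi [:: (r, 1)]) x.
Definition jet_d (q : Q1) : RtQ := tpi [:: (1, q)].

Definition is_diffop (D : Q1 -> Q2) : Prop :=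
  [/\ forall q q', D (q + q') = D q + D q',
      forall c q, D (phi c *: q) = phi c *: D q &
      exists (n : nat) (Dt : RtQ -> Q2),
        [/\ forall x y, Dt (x + y) = Dt x + Dt y,
            forall r x, Dt (jet_R_scale r x) = r *: Dt x,
            forall x, Ipow_mod n x -> Dt x = 0 &
            forall q, D q = Dt (jet_d q)]].

End DiffOp.

Arguments is_diffop {k R} phi {Q1 Q2} D.
Arguments tens_map {k A B phiA phiB M1 M2 N1 N2} D E x.
Arguments tens_struct {k A B} phiA phiB c.

(* Main.v *)
Require Import Defs.
From HB Require Import structures.
From mathcomp Require Import all_boot all_algebra.
From mathcomp Require Import boolp.
Import GRing.Theory.
Set Implicit Arguments. Unset Strict Implicit. Unset Printing Implicit Defensive.
Local Open Scope ring_scope.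

Section Gen.
Variables (k R : comPzRingType) (phi : k -> R) (Q1 Q2 : lmodType R).

Notation RtQ := (RtQ phi Q1).
Notation RtR := (RtR phi).
Notation act := (@RR_act k R phi Q1).

Lemma RR_act_pi s t : RR_act (tpi s : RtR) (tpi t : RtQ) = tpi (pairs *%R *:%R s t).
Proof.
apply: lift2_pi => *. all: rewrite /kact_r /kact_m ?mulrDl ?mulrDr ?scalerDl ?scalerDr ?mulrA ?scalerA //.
all: by rewrite (mulrC _ (phi _)).
all: by rewrite mulrC.
Qed.

Lemma tpi_cat (M N : zmodType) (aM : k -> M -> M) (aN : k -> N -> N) s t :
  tpi (aM:=aM) (aN:=aN) (s ++ t) = tpi s + tpi t.
Proof. by rewrite tens_addE. Qed.

Lemma RR_actDr x y y' : act x (y + y') = act x y + act x y'.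
Proof.
elim/tensW: x => x; elim/tensW: y => y; elim/tensW: y' => y'.
rewrite tens_addE !RR_act_pi tens_addE; apply: tensP => W f hf.
rewrite /sumf /pairs big_cat !big_allpairs_dep.
under eq_bigr => p _ do rewrite big_cat.
by rewrite big_split.
Qed.

Lemma RR_actDl x x' y : act (x + x') y = act x y + act x' y.
Proof.
elim/tensW: x => x; elim/tensW: x' => x'; elim/tensW: y => y.
rewrite tens_addE !RR_act_pi tens_addE; apply: tensP => W f hf.
by rewrite /sumf /pairs big_cat !big_allpairs_dep big_cat.
Qed.

Lemma mult_map_pi s : mult_map (tpi s : RtR) = sumf *%R s.
Proof.
rewrite /mult_map; apply: sumf_pi.
split => *; rewrite /kact_r ?mulrDl ?mulrDr //.
by rewrite mulrCA mulrA.
Qed.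


Lemma pairs1 (A B M N M' N' : zmodType) (op1 : A -> M -> M') (op2 : B -> N -> N') p t :
  pairs op1 op2 [:: p] t = [seq (op1 p.1 q.1, op2 p.2 q.2) | q <- t].
Proof. by rewrite /pairs /= cats0. Qed.

Lemma act0 y : act 0 y = 0.
Proof.
have h := RR_actDl 0 0 y; rewrite addr0 in h.
by apply: (addrI (act 0 y)); rewrite -h addr0.
Qed.

Lemma act0' y : act (tpi [::]) y = 0.
Proof. exact: act0. Qed.

Definition goodF (F : RtQ -> Q2) : Prop :=
  (forall x y, F (x + y) = F x + F y) /\ (forall r x, F (jet_R_scale r x) = r *: F x).

Definition Lb (b : R) (y : RtQ) : RtQ := act (tpi [:: (1, b)]) y.
Definition delta (b : R) (F : RtQ -> Q2) : RtQ -> Q2 := fun y => F (Lb b y) - b *: F y.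
Fixpoint ord (n : nat) (F : RtQ -> Q2) : Prop :=
  match n with 0 => forall y, F y = 0 | n'.+1 => forall b, ord n' (delta b F) end.

Lemma jetE r y : jet_R_scale r y = act (tpi [:: (r, 1)]) y.
Proof. by []. Qed.

Lemma Lb_jet b r y : Lb b (jet_R_scale r y) = jet_R_scale r (Lb b y).
Proof.
elim/tensW: y => t; rewrite /Lb !jetE (RR_act_pi [:: (r,1)] t) (RR_act_pi [:: (1,b)] t) !pairs1.
rewrite !RR_act_pi !pairs1 -!map_comp.
by congr tpi; apply: eq_map => q /=; rewrite !mul1r !scale1r.
Qed.

Lemma goodF0 F : goodF F -> F 0 = 0.
Proof. by case=> hD _; have h := hD 0 0; rewrite addr0 in h; apply: (addrI (F 0)); rewrite -h addr0. Qed.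

Lemma goodFN F x : goodF F -> F (- x) = - F x.
Proof.
move=> hF; apply/eqP; rewrite -addr_eq0 -(proj1 hF) addNr; exact/eqP/goodF0.
Qed.

Lemma good_delta b F : goodF F -> goodF (delta b F).
Proof.
move=> [hD hS]; split=> [x y|r x]; rewrite /delta.
  rewrite /Lb RR_actDr !hD scalerDr; by rewrite opprD addrACA.
by rewrite Lb_jet !hS scalerBr !scalerA mulrC.
Qed.

Lemma act_sum F x y : goodF F ->
  F (act x y) = \sum_(p <- trepr x) p.1 *: F (Lb p.2 y).
Proof.
move=> [hD hS]; elim/tensW: y => t; rewrite -{1}(tpiK x); elim: (trepr x) => [|p s IH].
  by rewrite big_nil act0'; apply: (goodF0 (conj hD hS)).
rewrite big_cons -IH -cat1s tpi_cat RR_actDl hD; congr (_ + _).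
rewrite -hS; congr F.
rewrite /Lb jetE (RR_act_pi [:: (1,p.2)] t) !pairs1 !RR_act_pi !pairs1 -!map_comp.
by congr tpi; apply: eq_map => q /=; rewrite !mul1r !scale1r.
Qed.

Lemma act_delta F x y : goodF F ->
  F (act x y) = \sum_(p <- trepr x) p.1 *: delta p.2 F y + mult_map x *: F y.
Proof.
move=> hF; rewrite act_sum // /delta /mult_map /sumf.
under [X in _ = X + _]eq_bigr => p _ do rewrite scalerBr scalerA.
by rewrite sumrB scaler_suml subrK.
Qed.

Lemma ordA n F : goodF F -> ord n.+1 F -> forall z, Ipow_gen n z -> F z = 0.
Proof.
elim: n F => [|n IH] F hF hO z /=.
  case=> x [y [hx ->]]; rewrite act_delta // hx scale0r addr0 big1 // => p _.
  by rewrite (hO p.2 y) scaler0.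
case=> x [y [hx hy ->]]; rewrite act_delta // hx scale0r addr0 big1 // => p _.
by rewrite (IH (delta p.2 F) (good_delta _ hF) (hO p.2) y hy) scaler0.
Qed.

Lemma ordA' n F : goodF F -> ord n.+1 F -> forall z, Ipow_mod n z -> F z = 0.
Proof.
move=> hF hO z [s [hs ->]]; elim: s hs => [|g s IH] hs.
  by rewrite big_nil; apply: goodF0.
rewrite big_cons (proj1 hF) IH; last by move=> g' hg'; apply: hs; rewrite in_cons hg' orbT.
by rewrite (ordA hF hO (hs g (mem_head _ _))) addr0.
Qed.

Definition xb (b : R) : RtR := tpi [:: (1, b); (-b, 1)].

Lemma xb_ker b : Ikernel (xb b).
Proof.
by rewrite /Ikernel /xb mult_map_pi /sumf !big_cons big_nil /= mul1r mulr1 addr0 subrr.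
Qed.

Lemma act_xb b y : act (xb b) y = Lb b y - jet_R_scale b y.
Proof.
rewrite /xb -cat1s tpi_cat RR_actDl /Lb; congr (_ + _); rewrite jetE.
apply/eqP; rewrite -addr_eq0 -RR_actDl tens_addE /=.
have -> : tpi [:: (- b, 1); (b, 1)] = 0 :> RtR.
  apply: tensP => W f hf; rewrite /sumf !big_cons !big_nil /=.
  by rewrite (balancedN hf) addr0 addNr.
by apply/eqP; apply: act0.
Qed.

Lemma ordB m F : goodF F -> (forall z, Ipow_gen m z -> F z = 0) -> ord m.+1 F.
Proof.
elim: m F => [|m IH] F hF hz b /=.
  move=> y; rewrite /delta -(proj2 hF); apply/eqP; rewrite subr_eq0; apply/eqP.
  apply/eqP; rewrite -subr_eq0 -(goodFN _ hF) -(proj1 hF) -act_xb; apply/eqP/hz.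
  by exists (xb b), y; split => //; apply: xb_ker.
apply: IH; first exact: good_delta.
move=> z hz'; rewrite /delta -(proj2 hF); apply/eqP; rewrite subr_eq0; apply/eqP.
apply/eqP; rewrite -subr_eq0 -(goodFN _ hF) -(proj1 hF) -act_xb; apply/eqP/hz.
by exists (xb b), z; split => //; apply: xb_ker.
Qed.

Lemma ordB' m F : goodF F -> (forall z, Ipow_mod m z -> F z = 0) -> ord m.+1 F.
Proof.
move=> hF hz; apply: ordB => // z hz'; apply: hz; exists [:: z]; split.
  by move=> g; rewrite inE => /eqP ->.
by rewrite big_seq1.
Qed.


Lemma ord_ext n F G : (forall y, F y = G y) -> ord n F -> ord n G.
Proof. by move=> h; have -> : F = G by apply: funext. Qed.

Lemma ord0F n : ord n (fun _ => 0).
Proof.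
elim: n => [|n IH] //= b; apply: ord_ext IH => y.
by rewrite /delta scaler0 subrr.
Qed.

Lemma ord_add n F G : ord n F -> ord n G -> ord n (fun y => F y + G y).
Proof.
elim: n F G => [|n IH] F G /= hF hG; first by move=> y; rewrite hF hG addr0.
move=> b; apply: ord_ext (IH _ _ (hF b) (hG b)) => y.
by rewrite /delta scalerDr opprD addrACA.
Qed.

Lemma ord_scale n r F : ord n F -> ord n (fun y => r *: F y).
Proof.
elim: n F => [|n IH] F /= hF; first by move=> y; rewrite hF scaler0.
move=> b; apply: ord_ext (IH _ (hF b)) => y.
by rewrite /delta scalerBr !scalerA mulrC.
Qed.

Lemma ord_sum (I : Type) n (s : seq I) (Fs : I -> RtQ -> Q2) :
  (forall i, ord n (Fs i)) -> ord n (fun y => \sum_(i <- s) Fs i y).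
Proof.
move=> h; elim: s => [|i s IH].
  by apply: ord_ext (ord0F n) => y; rewrite big_nil.
by apply: ord_ext (ord_add (h i) IH) => y; rewrite big_cons.
Qed.

Lemma ord_mono n F : ord n F -> ord n.+1 F.
Proof.
elim: n F => [|n IH] F /= hF b; last exact: IH.
by apply: ord_ext (ord0F 0) => y; rewrite /delta !hF scaler0 subrr.
Qed.

Lemma ord_le n m F : (n <= m)%N -> ord n F -> ord m F.
Proof.
move=> /subnK <-; elim: (m - n)%N => [|d IH] h //=.
by apply: (ord_mono (IH h)).
Qed.

Lemma LbD b b' y : Lb (b + b') y = Lb b y + Lb b' y.
Proof.
rewrite /Lb -RR_actDl tens_addE /=; congr act.
apply: tensP => W f [h1 h2 h3]; rewrite /sumf !big_cons !big_nil /=.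
by rewrite h2 !addr0.
Qed.

Lemma deltaD b b' F : goodF F ->
  delta (b + b') F = fun y => delta b F y + delta b' F y.
Proof.
move=> hF; apply: funext => y; rewrite /delta LbD (proj1 hF) scalerDl.
by rewrite opprD addrACA.
Qed.

Lemma delta0 F : goodF F -> delta 0 F = fun _ => 0.
Proof.
move=> hF; apply: funext => y; rewrite /delta scale0r subr0.
have -> : Lb 0 y = 0 by rewrite /Lb; have h := LbD 0 0 y; rewrite addr0 in h;
  apply: (addrI (Lb 0 y)); rewrite -h addr0.
exact: goodF0.
Qed.

Lemma delta_sum (I : Type) (s : seq I) (g : I -> R) F : goodF F ->
  delta (\sum_(i <- s) g i) F = fun y => \sum_(i <- s) delta (g i) F y.
Proof.
move=> hF; elim: s => [|i s IH].
  by rewrite big_nil delta0 //; apply: funext => y; rewrite big_nil.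
by rewrite big_cons deltaD // IH; apply: funext => y; rewrite big_cons.
Qed.

End Gen.

Section Box.
Variables (k A B : comPzRingType) (phiA : {rmorphism k -> A}) (phiB : {rmorphism k -> B}).
Variables (M1 M2 : lmodType A) (N1 N2 : lmodType B).

Notation T := (tens_alg phiA phiB).
Notation Q1 := (tens_mod phiA phiB M1 N1).
Notation Q2 := (tens_mod phiA phiB M2 N2).
Notation ts := (tens_struct phiA phiB).
Notation RQA := (RtQ phiA M1).
Notation RQB := (RtQ phiB N1).
Notation RQT := (RtQ ts Q1).

Lemma mulT_pi s t : (tpi s : T) * tpi t = tpi (pairs *%R *%R s t).
Proof. exact: ta_mul_pi. Qed.

Lemma scaleT_pi (M : lmodType A) (N : lmodType B) s t :
  (tpi s : T) *: (tpi t : tens_mod phiA phiB M N) = tpi (pairs *:%R *:%R s t).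
Proof. exact: tm_scale_pi. Qed.

Section Op.
Variables (R : comPzRingType) (phi : k -> R) (M M' : lmodType R).
Definition opF (F : RtQ phi M -> M') (a : R) (m : M) : M' := F (tpi [:: (a, m)]).

Variable F : RtQ phi M -> M'.
Hypothesis hF : goodF F.

Lemma opF_Dl a a' m : opF F (a + a') m = opF F a m + opF F a' m.
Proof.
rewrite /opF -(proj1 hF) tens_addE; congr F; apply: tensP => W f [h1 h2 h3].
by rewrite /sumf !big_cons !big_nil /= h1 !addr0.
Qed.

Lemma opF_Dr a m m' : opF F a (m + m') = opF F a m + opF F a m'.
Proof.
rewrite /opF -(proj1 hF) tens_addE; congr F; apply: tensP => W f [h1 h2 h3].
by rewrite /sumf !big_cons !big_nil /= h2 !addr0.
Qed.

Lemma opF_scale r a m : opF F (r * a) m = r *: opF F a m.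
Proof.
rewrite /opF -(proj2 hF) jetE RR_act_pi pairs1 /=.
by rewrite scale1r.
Qed.

Lemma opF_kl c a m : opF F (kact_r phi c a) m = kact_m phi c (opF F a m).
Proof. exact: opF_scale. Qed.

Lemma opF_kr c a m : opF F a (kact_m phi c m) = kact_m phi c (opF F a m).
Proof.
rewrite /kact_m -opF_scale /opF; congr F; apply: tensP => W f [h1 h2 h3].
by rewrite /sumf !big_cons !big_nil /= -h3 /kact_r mulrC.
Qed.

End Op.

Lemma good_scale (R : comPzRingType) (phi : k -> R) (M M' : lmodType R)
  (F : RtQ phi M -> M') r : goodF F -> goodF (fun y => r *: F y).
Proof.
move=> [hD hS]; split=> [x y|c x]; first by rewrite hD scalerDr.
by rewrite hS !scalerA mulrC.
Qed.

Lemma opF_delta (R : comPzRingType) (phi : k -> R) (M M' : lmodType R)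
  (F : RtQ phi M -> M') a a' m :
  opF (delta a F) a' m = opF F a' (a *: m) - a *: opF F a' m.
Proof. by rewrite /opF /delta /Lb RR_act_pi pairs1 /= mul1r. Qed.

Lemma bal_alg (kk : Type) (M N W : zmodType) (aM : kk -> M -> M) (aN : kk -> N -> N)
  (f : M -> N -> W) u v w z : balanced aM aN f ->
  f u w = f (u - v) (w - z) + f (u - v) z + f v (w - z) + f v z.
Proof.
case=> h1 h2 _; rewrite -addrA -!h2 !subrK -h1 subrK //.
Qed.

Definition Phi (F : RQA -> M2) (G : RQB -> N2) (al : T) (mu : Q1) : Q2 :=
  @lift2 k A B M1 N1 M2 N2 (kact_r phiA) (kact_r phiB)
    (kact_m phiA (V:=M1)) (kact_m phiB (V:=N1)) (kact_m phiA (V:=M2)) (kact_m phiB (V:=N2))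
    (opF F) (opF G) al mu.

Definition box F G (X : RQT) : Q2 := sumf (Phi F G) (trepr X).

Section BoxFG.
Variables (F : RQA -> M2) (G : RQB -> N2).
Hypotheses (hF : goodF F) (hG : goodF G).

Lemma Phi_pi s t : Phi F G (tpi s) (tpi t) = tpi (pairs (opF F) (opF G) s t).
Proof.
apply: lift2_pi.
- exact: opF_Dl. - exact: opF_Dr. - exact: opF_Dl. - exact: opF_Dr.
- exact: opF_kl. - exact: opF_kr. - exact: opF_kl. - exact: opF_kr.
Qed.

Lemma Phi_bal : balanced (kact_r ts) (kact_m ts (V:=Q1)) (Phi F G).
Proof.
split.
- move=> x x' y; elim/tensW: x => x; elim/tensW: x' => x'; elim/tensW: y => y.
  rewrite tens_addE !Phi_pi tens_addE; apply: tensP => W f hf.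
  by rewrite sumf_cat !sumf_pairs big_cat.
- move=> x y y'; elim/tensW: x => x; elim/tensW: y => y; elim/tensW: y' => y'.
  rewrite tens_addE !Phi_pi tens_addE; apply: tensP => W f hf.
  rewrite sumf_cat !sumf_pairs -big_split; apply: eq_bigr => p _.
  by rewrite big_cat.
- move=> c x y; elim/tensW: x => x; elim/tensW: y => y.
  rewrite /kact_r /kact_m /tens_struct mulT_pi scaleT_pi !pairs1 !Phi_pi.
  apply: tensP => W f hf; rewrite !sumf_pairs big_map; apply: eq_bigr => p _.
  rewrite big_map; apply: eq_bigr => q _ /=.
  by rewrite !mul1r scale1r (opF_scale hF) -[phiA c *: q.1]/(kact_m phiA c q.1) (opF_kr hF).
Qed.

Lemma box_pi s : box F G (tpi s) = sumf (Phi F G) s.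
Proof. exact: (sumf_pi s Phi_bal). Qed.

Lemma Phi_scale r al mu : Phi F G (r * al) mu = r *: Phi F G al mu.
Proof.
elim/tensW: r => r; elim/tensW: al => al; elim/tensW: mu => mu.
rewrite mulT_pi !Phi_pi scaleT_pi; apply: tensP => W f hf.
rewrite /sumf /pairs !big_allpairs_dep /=.
under [RHS]eq_bigr => p _ do rewrite big_allpairs_dep /=.
apply: eq_bigr => p _; apply: eq_bigr => q _; apply: eq_bigr => u _ /=.
by rewrite (opF_scale hF) (opF_scale hG).
Qed.

Lemma good_box : goodF (box F G).
Proof.
split.
  move=> x y; elim/tensW: x => x; elim/tensW: y => y.
  by rewrite tens_addE !box_pi sumf_cat.
move=> r x; elim/tensW: x => x.
rewrite jetE RR_act_pi pairs1 !box_pi /sumf big_map scaler_sumr.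
by apply: eq_bigr => p _ /=; rewrite scale1r Phi_scale.
Qed.

End BoxFG.

Lemma box_delta F G a b : goodF F -> goodF G -> forall y,
  delta (tpi [:: (a, b)] : T) (box F G) y =
  box (delta a F) (delta b G) y + box (delta a F) (fun z => b *: G z) y
  + box (fun z => a *: F z) (delta b G) y.
Proof.
move=> hF hG y; elim/tensW: y => s.
have gF := good_delta a hF; have gG := good_delta b hG.
have sF := good_scale a hF; have sG := good_scale b hG.
rewrite {1}/delta /Lb RR_act_pi pairs1 !box_pi // /sumf big_map scaler_sumr.
rewrite -sumrB -!big_split; apply: eq_bigr => p _ /=; rewrite mul1r.
elim/tensW: (p.1) => sa; elim/tensW: (p.2) => sm.
rewrite scaleT_pi pairs1 !Phi_pi // scaleT_pi pairs1.
apply/eqP; rewrite subr_eq; apply/eqP; rewrite !tens_addE; apply: tensP => W f hf.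
rewrite ?(sumf_cat, sumf_pi _ hf) !sumf_pairs /sumf big_map /pairs big_allpairs_dep.
rewrite -!big_split; apply: eq_bigr => q _ /=; rewrite big_map.
rewrite -!big_split; apply: eq_bigr => u _ /=.
by rewrite !opF_delta; apply: bal_alg hf.
Qed.

Lemma box0 F G : (forall y, F y = 0) -> forall X, box F G X = 0.
Proof.
move=> h X; rewrite /box /sumf big1 // => p _.
elim/tensW: (p.1) => al; elim/tensW: (p.2) => mu.
rewrite /Phi /lift2.
apply: (@tensP _ _ _ _ _ _ [::]) => W f hf.
rewrite sumf_pairs /sumf big_nil big1 // => a _; rewrite big1 // => b _.
rewrite /opF h; case: hf => h1 _ _; have e := h1 0 0 (opF G a.2 b.2).
by rewrite addr0 in e; apply: (addrI (f 0 (opF G a.2 b.2))); rewrite -e addr0.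
Qed.

End Box.

Lemma tpi_sum (kk : Type) (M N : zmodType) (aM : kk -> M -> M) (aN : kk -> N -> N) s :
  tpi (aM:=aM) (aN:=aN) s = \sum_(x <- s) tpi [:: x].
Proof.
elim: s => [|x s IH]; first by rewrite big_nil.
by rewrite big_cons -IH tens_addE.
Qed.

Section Main.
Variables (k A B : comPzRingType) (phiA : {rmorphism k -> A}) (phiB : {rmorphism k -> B}).
Variables (M1 M2 : lmodType A) (N1 N2 : lmodType B).

Lemma box0r (F : RtQ phiA M1 -> M2) (G : RtQ phiB N1 -> N2) :
  (forall y, G y = 0) -> forall X, box F G X = 0.
Proof.
move=> h X; rewrite /box /sumf big1 // => p _.
elim/tensW: (p.1) => al; elim/tensW: (p.2) => mu.
rewrite /Phi /lift2.
apply: (@tensP _ _ _ _ _ _ [::]) => W f hf.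
rewrite sumf_pairs /sumf big_nil big1 // => a _; rewrite big1 // => b _.
rewrite /opF h; case: hf => _ h2 _; have e := h2 (opF F a.1 b.1) 0 0.
by rewrite addr0 in e; apply: (addrI (f (opF F a.1 b.1) 0)); rewrite -e addr0.
Qed.

Lemma ord_box p q (F : RtQ phiA M1 -> M2) (G : RtQ phiB N1 -> N2) :
  goodF F -> goodF G -> ord p F -> ord q G -> ord (p + q) (box F G).
Proof.
elim: p q F G => [|p IHp] q F G hF hG oF oG.
  by apply: ord_ext (ord0F _ _ _ _) => y; rewrite box0.
elim: q F G hF hG oF oG => [|q IHq] F G hF hG oF oG.
  by apply: ord_ext (ord0F _ _ _ _) => y; rewrite box0r.
rewrite addSn /= => be; elim/tensW: be => sb.
rewrite (tpi_sum _ _ sb) (delta_sum _ _ (good_box hF hG)).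
apply: ord_sum => -[a b].
apply: (ord_ext (fun y => esym (box_delta a b hF hG y))).
have gF := good_delta a hF; have gG := good_delta b hG.
have sF := good_scale a hF; have sG := good_scale b hG.
apply: ord_add; first apply: ord_add.
- by apply: (ord_le _ (IHp q _ _ gF gG (oF a) (oG b))); rewrite leq_add2l.
- exact: (IHp q.+1 _ _ gF sG (oF a) (ord_scale b oG)).
- by rewrite -addSnnS; apply: (IHq _ _ sF gG (ord_scale a oF) (oG b)).
Qed.

End Main.

Lemma tens_map_pi (k A B : comPzRingType) (phiA : {rmorphism k -> A}) (phiB : {rmorphism k -> B})
  (M1 M2 : lmodType A) (N1 N2 : lmodType B) (D : M1 -> M2) (E : N1 -> N2) t :
  (forall q q', D (q + q') = D q + D q') -> (forall c q, D (phiA c *: q) = phiA c *: D q) ->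
  (forall q q', E (q + q') = E q + E q') -> (forall c q, E (phiB c *: q) = phiB c *: E q) ->
  tens_map D E (tpi t : tens_mod phiA phiB M1 N1) =
  tpi [seq (D p.1, E p.2) | p <- t] :> tens_mod phiA phiB M2 N2.
Proof.
move=> hD1 hD2 hE1 hE2; rewrite /tens_map; apply: tensP => W f hf.
have hg : balanced (kact_m phiA (V:=M1)) (kact_m phiB (V:=N1)) (fun m n => f (D m) (E n)).
  case: hf => h1 h2 h3; split=> [m m' n|m n n'|c m n]; rewrite ?hD1 ?hE1 ?h1 ?h2 //.
  by rewrite /kact_m hD2 hE2 -h3.
rewrite /sumf !big_map; exact: (sumf_pi t hg).
Qed.

Theorem mainTheorem19 (k A B : comPzRingType)
  (phiA : {rmorphism k -> A}) (phiB : {rmorphism k -> B})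
  (M1 M2 : lmodType A) (N1 N2 : lmodType B) (D : M1 -> M2) (E : N1 -> N2) :
  is_diffop phiA D -> is_diffop phiB E ->
  is_diffop (tens_struct phiA phiB) (tens_map D E).
Proof.
case=> hD1 hD2 [pD [DtD [DA DS DI DE]]]; case=> hE1 hE2 [pE [DtE [EA ES EI EE]]].
have gD : goodF DtD by split.
have gE : goodF DtE by split.
have oD := ordB' gD DI; have oE := ordB' gE EI.
have oB := ord_box gD gE oD oE; rewrite addSn addnS in oB.
have gB := good_box gD gE.
split.
- move=> x y; elim/tensW: x => x; elim/tensW: y => y.
  by rewrite tens_addE !tens_map_pi // map_cat tens_addE.
- move=> c x; elim/tensW: x => x.
  rewrite /tens_struct scaleT_pi pairs1 !tens_map_pi // scaleT_pi pairs1 -!map_comp.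
  by congr tpi; apply: eq_map => q /=; rewrite hD2 !scale1r.
exists (pD + pE).+1, (box DtD DtE); split.
- exact: (proj1 gB).
- exact: (proj2 gB).
- exact: ordA' gB oB.
move=> q; elim/tensW: q => t; rewrite /jet_d box_pi //.
rewrite /sumf big_cons big_nil addr0 /=.
have -> : (1 : tens_alg phiA phiB) = tpi [:: (1, 1)] by [].
rewrite Phi_pi // pairs1 tens_map_pi //; congr tpi; apply: eq_map => q /=.
by rewrite /opF DE EE.
Qed.
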